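(* Let $k\ge2$ be an integer and $p$ an odd prime. Let $$F(t)={}_{k}F_{k-1}\left(\tfrac12,\ldots,\tfrac12;1,\ldots,1\,\middle|\,t\right)=\sum_{n\ge0}\left(\frac{(\frac12)_n}{n!}\right)^{k}t^n,$$ with $k$ upper parameters equal to $\frac12$ and $k-1$ lower parameters equal to $1$. Then for all integers $s\ge1$, $$\frac{F(t)}{F(t^p)}\equiv \frac{F_{p^s}(t)}{F_{p^{s-1}}(t^p)}\pmod{p^s},$$ as power series in $\mathbb{Z}_p[[t]]$ (coefficientwise).
   Context: $(a)_n=a(a+1)\cdots(a+n-1)$ denotes the Pochhammer symbol. For a power series $G(t)$ and an integer $m\ge1$, $G_m(t)$ denotes its truncation: all terms of degree $\ge m$ are deleted; $G_m(t^p)$ denotes this truncation with $t$ replaced by $t^p$. For $k=2$ the series is $F(\frac12,\frac12,1\,|\,t)$. *)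

(* Defs.v *)
From mathcomp Require Import all_boot all_order all_algebra.
Set Implicit Arguments. Unset Strict Implicit. Unset Printing Implicit Defensive.
Import Order.TTheory GRing.Theory Num.Theory.
Local Open Scope ring_scope.

(* formal power series with rational coefficients: n |-> coefficient of t^n *)
Definition pseries := nat -> rat.

Definition pochhammer (a : rat) (n : nat) : rat := \prod_(i < n) (a + i%:R).

Definition Fser (k : nat) : pseries :=
  fun n => (pochhammer (1 / 2) n / (n `!)%:R) ^+ k.

Definition ps_trunc (m : nat) (f : pseries) : pseries :=
  fun n => if (n < m)%N then f n else 0.

(* substitution t |-> t^p *)
Definition subst_pow (p : nat) (f : pseries) : pseries :=
  fun n => if (p %| n)%N then f (n %/ p)%N else 0.

Definition ps_mul (f g : pseries) : pseries :=
  fun n => \sum_(i < n.+1) f i * g (n - i)%N.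

(* coefficients 0..n of the multiplicative inverse (f 0 assumed nonzero) *)
Fixpoint pinv_aux (f : pseries) (n : nat) : seq rat :=
  match n with
  | 0 => [:: (f 0%N)^-1]
  | m.+1 => let s := pinv_aux f m in
            rcons s (- (f 0%N)^-1 *
                     \sum_(1 <= i < m.+2) f i * nth 0 s (m.+1 - i)%N)
  end.

Definition ps_inv (f : pseries) : pseries := fun n => nth 0 (pinv_aux f n) n.

Definition ps_div (f g : pseries) : pseries := ps_mul f (ps_inv g).

(* x lies in p^s Z_(p), i.e. x = p^s a / b with a, b integers, p not dividing b *)
Definition in_pZp (p s : nat) (x : rat) : Prop :=
  exists (a b : int), ~~ (p%:Z %| b)%Z /\ x = (p ^ s)%:R * a%:~R / b%:~R.

Definition pcong (p s : nat) (f g : pseries) : Prop :=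
  forall n, in_pZp p s (f n - g n).

(* Main.v *)
Require Import Defs.
From mathcomp Require Import all_boot all_order all_algebra.
From mathcomp Require Import zify ring lra.
Set Implicit Arguments. Unset Strict Implicit. Unset Printing Implicit Defensive.
Import Order.TTheory GRing.Theory Num.Theory.

Section Zp.
Local Open Scope ring_scope.
Variable p : nat.
Hypothesis pr : prime p.

Notation Z e x := (in_pZp p e x).

Lemma ndvd_mul (b d : int) : ~~ (p%:Z %| b)%Z -> ~~ (p%:Z %| d)%Z -> ~~ (p%:Z %| b * d)%Z.
Proof.
rewrite !dvdzE abszM /= Euclid_dvdM // => /negbTE -> /negbTE -> //.
Qed.

Lemma ndvd_nz (b : int) : ~~ (p%:Z %| b)%Z -> b%:~R != 0 :> rat.
Proof. apply: contra => h; have : b == 0 by rewrite -(intr_eq0 rat). by move/eqP ->; rewrite dvdz0. Qed.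

Lemma Z0 e : Z e 0.
Proof. by exists 0, 1; rewrite dvdz1 /=; split; [case: p pr => [|[|]]|] ; rewrite ?mulr0 ?mul0r. Qed.

Lemma Zint e (a : int) : Z e ((p ^ e)%:R * a%:~R).
Proof. exists a, 1; split; last by rewrite divr1.
by rewrite dvdzE /= dvdn1; case: p pr => [|[|]]. Qed.

Lemma Zint0 (a : int) : Z 0 a%:~R.
Proof. by have := Zint 0 a; rewrite expn0 mul1r. Qed.

Lemma Znat0 (a : nat) : Z 0 a%:R.
Proof. by have := Zint0 a. Qed.

Lemma Zadd e x y : Z e x -> Z e y -> Z e (x + y).
Proof.
move=> [a [b [hb ->]]] [c [d [hd ->]]].
exists (a * d + c * b), (b * d); split; first exact: ndvd_mul.
have hb0 := ndvd_nz hb; have hd0 := ndvd_nz hd.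
rewrite rmorphD !rmorphM /=; field; by apply/andP.
Qed.

Lemma Zopp e x : Z e x -> Z e (- x).
Proof.
move=> [a [b [hb ->]]]; exists (- a), b; split => //.
by rewrite rmorphN /= mulrN mulNr.
Qed.

Lemma Zsub e x y : Z e x -> Z e y -> Z e (x - y).
Proof. by move=> hx hy; apply: Zadd => //; apply: Zopp. Qed.

Lemma Zmul e f x y : Z e x -> Z f y -> Z (e + f) (x * y).
Proof.
move=> [a [b [hb ->]]] [c [d [hd ->]]].
exists (a * c), (b * d); split; first exact: ndvd_mul.
have hb0 := ndvd_nz hb; have hd0 := ndvd_nz hd.
rewrite !rmorphM /= expnD natrM; field; by apply/andP.
Qed.

Lemma Zmul0 e x y : Z 0 x -> Z e y -> Z e (x * y).
Proof. exact: Zmul. Qed.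

Lemma Zmul0r e x y : Z e x -> Z 0 y -> Z e (x * y).
Proof. by move=> hx hy; have := Zmul hx hy; rewrite addn0. Qed.

Lemma Zweak e f x : (f <= e)%N -> Z e x -> Z f x.
Proof.
move=> hfe [a [b [hb ->]]]; exists ((p ^ (e - f))%:R * a), b; split => //.
rewrite rmorphM /= mulrz_nat.
rewrite (_ : (p ^ e)%:R = (p ^ (e-f))%:R * (p ^ f)%:R :> rat); last by rewrite -natrM -expnD subnK.
by rewrite !mulrA [_ * (p ^ f)%:R]mulrC.
Qed.

Lemma Zpow e : Z e (p ^ e)%:R.
Proof. by have := Zint e 1; rewrite mulr1. Qed.

Lemma Zdivp e x : Z e.+1 x -> Z e (x / p%:R).
Proof.
move=> [a [b [hb ->]]]; exists a, b; split => //.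
have hp : p%:R != 0 :> rat by rewrite pnatr_eq0; case: p pr => [|].
rewrite expnS natrM; field; apply/andP; split => //; exact: ndvd_nz.
Qed.

Lemma Zinvnat (n : nat) : ~~ (p %| n)%N -> Z 0 (n%:R)^-1.
Proof.
move=> hn; exists 1, n; split; first by rewrite dvdzE.
by rewrite expn0 mul1r pmulrn.
Qed.

Lemma Zsum e (I : Type) (r : seq I) (P : pred I) (F : I -> rat) :
  (forall i, P i -> Z e (F i)) -> Z e (\sum_(i <- r | P i) F i).
Proof.
move=> h; elim/big_rec: _ => [|i x Pi hx]; first exact: Z0.
exact: Zadd (h i Pi) hx.
Qed.

Lemma Zprod (I : Type) (r : seq I) (P : pred I) (F : I -> rat) :
  (forall i, P i -> Z 0 (F i)) -> Z 0 (\prod_(i <- r | P i) F i).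
Proof.
move=> h; elim/big_rec: _ => [|i x Pi hx]; first by have := Znat0 1.
exact: Zmul0 (h i Pi) hx.
Qed.

Lemma Zexp x n : Z 0 x -> Z 0 (x ^+ n).
Proof. by move=> hx; elim: n => [|n ih]; [have := Znat0 1| rewrite exprS; apply: Zmul0]. Qed.

Lemma Zpmul e x : Z 0 x -> Z e ((p ^ e)%:R * x).
Proof. by move=> hx; have := Zmul (Zpow e) hx; rewrite addn0. Qed.

End Zp.
Section Series.
Local Open Scope ring_scope.
Variable p : nat.
Hypothesis pr : prime p.
Notation Z e x := (in_pZp p e x).

Lemma size_pinv f n : size (pinv_aux f n) = n.+1.
Proof. by elim: n => [|n ih] //=; rewrite size_rcons ih. Qed.

Lemma nth_pinv f n m : (m <= n)%N -> nth 0 (pinv_aux f n) m = ps_inv f m.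
Proof.
elim: n => [|n ih]; first by rewrite leqn0 => /eqP ->.
rewrite leq_eqVlt => /orP [/eqP -> //| hm].
by rewrite /= nth_rcons size_pinv hm ih.
Qed.

Lemma ps_invS f m : ps_inv f m.+1 =
  - (f 0%N)^-1 * \sum_(1 <= i < m.+2) f i * ps_inv f (m.+1 - i)%N.
Proof.
rewrite {1}/ps_inv /= nth_rcons size_pinv ltnn eqxx; congr (_ * _).
apply: eq_big_nat => i /andP [h1 h2]; rewrite nth_pinv //.
by rewrite leq_subLR -addn1 addnC leq_add2r.
Qed.

Lemma ps_mul_inv f n : f 0%N = 1 -> ps_mul f (ps_inv f) n = (n == 0%N)%:R.
Proof.
move=> f0; case: n => [|m].
  by rewrite /ps_mul big_ord1 /ps_inv /= f0 invr1 mulr1.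
rewrite /ps_mul big_ord_recl /= subn0 ps_invS f0 invr1 mulN1r mul1r.
rewrite big_add1 /= big_mkord.
by rewrite addNr.
Qed.

Lemma Z_inv f : f 0%N = 1 -> (forall i, Z 0 (f i)) -> forall n, Z 0 (ps_inv f n).
Proof.
move=> f0 hf n; elim: n {-2}n (leqnn n) => [|n ih] m hm.
  by move: hm; rewrite leqn0 => /eqP ->; rewrite /ps_inv /= f0 invr1; have := Znat0 pr 1.
move: hm; rewrite leq_eqVlt => /orP [/eqP ->|]; last by rewrite ltnS; apply: ih.
rewrite ps_invS f0 invr1 mulN1r; apply: Zopp; rewrite big_nat_cond; apply: (Zsum pr) => i /andP [/andP [h1 h2] _].
apply: (Zmul0 pr) => //; apply: ih.
by rewrite leq_subLR -addn1 addnC leq_add2r.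
Qed.

End Series.
Section Reduce.
Local Open Scope ring_scope.
Variable p : nat.
Hypothesis pr : prime p.
Notation Zq e x := (in_pZp p e x).

Definition tp (n : nat) (f : pseries) : {poly rat} := \poly_(i < n.+1) f i.

Lemma coef_tp n f i : (i <= n)%N -> (tp n f)`_i = f i.
Proof. by move=> h; rewrite coef_poly ltnS h. Qed.

Definition agree n (P Q : {poly rat}) := forall i, (i <= n)%N -> P`_i = Q`_i.

Lemma mul_agree n (P Q : {poly rat}) f g :
  (forall i, (i <= n)%N -> P`_i = f i) -> (forall i, (i <= n)%N -> Q`_i = g i) ->
  forall m, (m <= n)%N -> (P * Q)`_m = ps_mul f g m.
Proof.
move=> hP hQ m hm; rewrite coefM /ps_mul; apply: eq_bigr => [[i hi]] _ /=.
rewrite hP ?hQ //; last by apply: leq_trans hm; rewrite ltnS in hi.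
by apply: leq_trans hm; apply: leq_subr.
Qed.

Lemma agree_mul n P P' Q Q' : agree n P P' -> agree n Q Q' -> agree n (P * Q) (P' * Q').
Proof.
move=> hP hQ m hm; rewrite !coefM; apply: eq_bigr => [[i hi]] _ /=.
rewrite hP ?hQ //; last by apply: leq_trans hm; rewrite ltnS in hi.
by apply: leq_trans hm; apply: leq_subr.
Qed.

Lemma agree_sub n P P' Q Q' : agree n P P' -> agree n Q Q' -> agree n (P - Q) (P' - Q').
Proof. by move=> hP hQ m hm; rewrite !coefB hP ?hQ. Qed.

Lemma agree_refl n P : agree n P P. Proof. by []. Qed.

Lemma reduce e (X Y Z W : pseries) :
  Y 0%N = 1 -> W 0%N = 1 -> (forall i, Zq 0 (Y i)) -> (forall i, Zq 0 (W i)) ->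
  (forall N, Zq e (ps_mul X W N - ps_mul Z Y N)) ->
  pcong p e (ps_div X Y) (ps_div Z W).
Proof.
move=> Y0 W0 hY hW hD n.
pose x := tp n X; pose y := tp n Y; pose z := tp n Z; pose w := tp n W.
pose iy := tp n (ps_inv Y); pose iw := tp n (ps_inv W).
have ct f i : (i <= n)%N -> (tp n f)`_i = f i by exact: coef_tp.
have hy : agree n (y * iy) 1.
  by move=> i hi; rewrite (mul_agree (ct Y) (ct (ps_inv Y))) // ps_mul_inv // coef1.
have hw : agree n (w * iw) 1.
  by move=> i hi; rewrite (mul_agree (ct W) (ct (ps_inv W))) // ps_mul_inv // coef1.
have e1 : ps_div X Y n - ps_div Z W n = (x * iy - z * iw)`_n.
  by rewrite coefB /ps_div !(mul_agree (ct _) (ct _)).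
have e2 : agree n (x * iy - z * iw) ((x * w - z * y) * (iy * iw)).
  have -> : (x * w - z * y) * (iy * iw) = (x * iy) * (w * iw) - (z * iw) * (y * iy) by ring.
  rewrite -{1}[x * iy]mulr1 -{1}[z * iw]mulr1.
  apply: agree_sub.
    apply: agree_mul; first exact: agree_refl.
    by move=> j hj; rewrite hw.
  apply: agree_mul; first exact: agree_refl.
  by move=> j hj; rewrite hy.
rewrite e1 e2 // coefM; apply: (Zsum pr) => [[j hj]] _ /=.
apply: (Zmul0r pr).
  rewrite coefB !(mul_agree (ct _) (ct _)) //; by rewrite ltnS in hj.
rewrite (mul_agree (ct _) (ct _)) ?leq_subr //; apply: (Zsum pr) => i _.
by apply: (Zmul0 pr); apply: Z_inv.
Qed.

End Reduce.
Section Dwork.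
Local Open Scope ring_scope.
Variable p : nat.
Hypothesis pr : prime p.
Notation Zq e x := (in_pZp p e x).

Definition C1 (f : nat -> rat) :=
  (forall u, Zq 0 (f u)) /\ (forall u m j, Zq j.+1 (f (u + m * p ^ j)%N - f u)).

Lemma C1_const c : Zq 0 c -> C1 (fun _ => c).
Proof. by move=> hc; split => // u m j; rewrite subrr; apply: Z0. Qed.

Lemma C1_mul f g : C1 f -> C1 g -> C1 (fun u => f u * g u).
Proof.
move=> [f0 f1] [g0 g1]; split=> [u|u m j]; first exact: (Zmul0 pr).
set u' := (u + m * p ^ j)%N.
have -> : f u' * g u' - f u * g u = f u' * (g u' - g u) + (f u' - f u) * g u by ring.
by apply: (Zadd pr); [apply: (Zmul0 pr)|apply: (Zmul0r pr)]; rewrite /u'; auto.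
Qed.

Lemma C1_lin c d f g : Zq 0 c -> Zq 0 d -> C1 f -> C1 g -> C1 (fun u => c * f u + d * g u).
Proof.
move=> hc hd [f0 f1] [g0 g1]; split=> [u|u m j].
  by apply: (Zadd pr); apply: (Zmul0 pr); auto.
set u' := (u + m * p ^ j)%N.
have -> : c * f u' + d * g u' - (c * f u + d * g u) = c * (f u' - f u) + d * (g u' - g u) by ring.
by apply: (Zadd pr); apply: (Zmul0 pr); rewrite /u'; auto.
Qed.

Lemma C1_ext f g : (forall u, f u = g u) -> C1 f -> C1 g.
Proof. by move=> e [f0 f1]; split => *; rewrite -?e. Qed.

Lemma C1_base f x : C1 f -> Zq 1 (f x - f 0%N).
Proof. by move=> [_ f1]; have := f1 0%N x 0%N; rewrite expn0 muln1. Qed.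

Lemma pgt0 : (0 < p)%N. Proof. exact: prime_gt0. Qed.

Lemma C1_shift f b : C1 f -> C1 (fun u => (f (b + p * u)%N - f b) / p%:R).
Proof.
move=> hf; have [f0 f1] := hf; split=> [u|u m j].
  apply: (Zweak (f := 0) (e := 1)) => //; apply: (Zdivp pr).
  by have := f1 b u 1%N; rewrite expn1 mulnC.
set X := f _; set Y := f (b + p * u)%N.
have -> : (X - f b) / p%:R - (Y - f b) / p%:R = (X - Y) / p%:R by ring.
apply: (Zdivp pr); rewrite /X /Y.
have -> : (b + p * (u + m * p ^ j))%N = ((b + p * u) + m * p ^ j.+1)%N.
  by rewrite expnS mulnDr addnA mulnCA.
exact: f1.
Qed.

End Dwork.
Section Dwork2.
Local Open Scope ring_scope.
Variable p : nat.
Hypothesis pr : prime p.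
Notation Zq e x := (in_pZp p e x).
Variable A : nat -> rat.
Variable G : nat -> nat -> rat.
Hypothesis hA : forall x, Zq 0 (A x).
Hypothesis hdec : forall a u, (a < p)%N -> A (a + p * u)%N = A u * G a u.
Hypothesis hG : forall a, (a < p)%N -> C1 p (G a).

Definition S B t m M (K L : nat -> rat) :=
  \sum_(0 <= x < B) \sum_(0 <= y < B)
    ((x + y == M)%N%:R * (((x %/ p ^ t)%N == m)%:R * (A x * A y * (K x * L y)))).

Definition Phi B t m M K L := S B t m M L K - S B t m M K L.

Lemma Zsum_nat e m n (F : nat -> rat) :
  (forall i, (m <= i < n)%N -> Zq e (F i)) -> Zq e (\sum_(m <= i < n) F i).
Proof. by move=> h; rewrite big_nat_cond; apply: (Zsum pr) => i /andP [hi _]; apply: h. Qed.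

Lemma S_linK B t m M c d K1 K2 L :
  S B t m M (fun u => c * K1 u + d * K2 u) L = c * S B t m M K1 L + d * S B t m M K2 L.
Proof.
rewrite /S !mulr_sumr -big_split; apply: eq_bigr => x _.
rewrite !mulr_sumr -big_split; apply: eq_bigr => y _ /=; ring.
Qed.

Lemma S_linL B t m M c d K L1 L2 :
  S B t m M K (fun u => c * L1 u + d * L2 u) = c * S B t m M K L1 + d * S B t m M K L2.
Proof.
rewrite /S !mulr_sumr -big_split; apply: eq_bigr => x _.
rewrite !mulr_sumr -big_split; apply: eq_bigr => y _ /=; ring.
Qed.

Lemma S_ext B t m M K K' L L' : (forall u, K u = K' u) -> (forall u, L u = L' u) ->
  S B t m M K L = S B t m M K' L'.
Proof.
move=> hK hL; rewrite /S; apply: eq_bigr => x _; apply: eq_bigr => y _.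
by rewrite hK hL.
Qed.

Lemma Phi_linK B t m M c d K1 K2 L :
  Phi B t m M (fun u => c * K1 u + d * K2 u) L = c * Phi B t m M K1 L + d * Phi B t m M K2 L.
Proof. rewrite /Phi S_linK S_linL; ring. Qed.

Lemma Phi_linL B t m M c d K L1 L2 :
  Phi B t m M K (fun u => c * L1 u + d * L2 u) = c * Phi B t m M K L1 + d * Phi B t m M K L2.
Proof. rewrite /Phi S_linK S_linL; ring. Qed.

Lemma Phi_anti B t m M K L : Phi B t m M K L = - Phi B t m M L K.
Proof. rewrite /Phi; ring. Qed.

Lemma Phi_ext B t m M K K' L L' : (forall u, K u = K' u) -> (forall u, L u = L' u) ->
  Phi B t m M K L = Phi B t m M K' L'.
Proof. by move=> hK hL; rewrite /Phi (S_ext _ _ _ _ hK hL) (S_ext _ _ _ _ hL hK). Qed.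

Lemma Phi_base B m M K L : C1 p K -> C1 p L -> Zq 1 (Phi B 0 m M K L).
Proof.
move=> hK hL; rewrite /Phi /S -sumrB; apply: (Zsum pr) => x _.
rewrite -sumrB; apply: (Zsum pr) => y _.
set c1 := _%:R; set c2 := _%:R.
have -> : c1 * (c2 * (A x * A y * (L x * K y))) - c1 * (c2 * (A x * A y * (K x * L y)))
  = (c1 * c2 * A x * A y) * (L x * (K y - K 0%N) - K x * (L y - L 0%N)
      + K 0%N * (L x - L 0%N) - L 0%N * (K x - K 0%N)) by ring.
apply: (Zmul0 pr).
  apply: (Zmul0 pr); last exact: hA.
  apply: (Zmul0 pr); last exact: hA.
  by apply: (Zmul0 pr); apply: (Znat0 pr).
have [K0 _] := hK; have [L0 _] := hL.
apply: (Zsub pr); [apply: (Zadd pr); [apply: (Zsub pr)|]|].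
- by apply: (Zmul0 pr) => //; apply: C1_base.
- by apply: (Zmul0 pr) => //; apply: C1_base.
- by apply: (Zmul0 pr) => //; apply: C1_base.
- by apply: (Zmul0 pr) => //; apply: C1_base.
Qed.


Lemma ext_sum B B' M (F : nat -> nat -> rat) :
  (forall x y, (M < x + y)%N -> F x y = 0) -> (M < B)%N -> (B <= B')%N ->
  \sum_(0 <= x < B') \sum_(0 <= y < B') F x y = \sum_(0 <= x < B) \sum_(0 <= y < B) F x y.
Proof.
move=> hF hMB hBB.
rewrite (big_cat_nat _ (n := B)) //= [X in _ + X]big_nat_cond [X in _ + X]big1 ?addr0; last first.
  move=> x /andP [/andP [hx _] _]; apply: big1 => y _; apply: hF.
  by apply: leq_trans hMB (leq_trans hx (leq_addr _ _)).
apply: eq_big_nat => x /andP [_ hx].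
rewrite (big_cat_nat _ (n := B)) //= [X in _ + X]big_nat_cond [X in _ + X]big1 ?addr0 //.
move=> y /andP [/andP [hy _] _]; apply: hF.
by apply: leq_trans hMB (leq_trans hy (leq_addl _ _)).
Qed.

Lemma S_bound B B' t m M K L : (M < B)%N -> (B <= B')%N ->
  S B' t m M K L = S B t m M K L.
Proof.
move=> h1 h2; rewrite /S; apply: (ext_sum (M := M)) => // x y hxy.
by rewrite (_ : (x + y == M)%N = false) ?mul0r //; apply/negbTE; rewrite neq_ltn hxy orbT.
Qed.

Lemma Phi_bound B B' t m M K L : (M < B)%N -> (B <= B')%N ->
  Phi B' t m M K L = Phi B t m M K L.
Proof. by move=> h1 h2; rewrite /Phi; congr (_ - _); apply: S_bound. Qed.

Lemma decomp B (f : nat -> rat) :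
  \sum_(0 <= x < p * B) f x = \sum_(0 <= a < p) \sum_(0 <= x < B) f (a + p * x)%N.
Proof.
elim: B => [|B ih].
  by rewrite muln0 big_geq // big1 // => a _; rewrite big_geq.
rewrite mulnS addnC (big_cat_nat _ (n := p * B)) //= ?leq_addr // ih.
have -> : \sum_(p * B <= i < p * B + p) f i = \sum_(0 <= a < p) f (a + p * B)%N.
  by rewrite -{1}[(p * B)%N]add0n big_addn addKn.
rewrite -big_split /=; apply: eq_bigr => a _.
by rewrite big_nat_recr.
Qed.

Lemma idx_div a x t : (a < p)%N -> ((a + p * x) %/ p ^ t.+1 = x %/ p ^ t)%N.
Proof.
move=> ha; rewrite expnS divnMA; congr (_ %/ _)%N.
by rewrite addnC mulnC divnMDl ?prime_gt0 // divn_small // addn0.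
Qed.

Lemma idx_eq a b x y M :
  (a + p * x + (b + p * y) == M)%N =
  ((a + b <= M) && (p %| M - (a + b)))%N && (x + y == (M - (a + b)) %/ p)%N.
Proof.
have p0 : (0 < p)%N by apply: prime_gt0.
have e : (a + p * x + (b + p * y) = (a + b) + p * (x + y))%N.
  by rewrite mulnDr; rewrite -!addnA; congr (_ + _)%N; rewrite addnCA.
rewrite e; apply/eqP/idP.
  move=> <-; rewrite leq_addr addKn dvdn_mulr //= mulKn //.
move=> /andP [/andP [h1 h2] /eqP h3].
by rewrite h3 mulnC divnK // subnKC.
Qed.

Lemma S_decomp B t m M K L :
  S (p * B) t.+1 m M K L =
  \sum_(0 <= a < p) \sum_(0 <= b < p)
    (((a + b <= M) && (p %| M - (a + b)))%N%:R *
      S B t m ((M - (a + b)) %/ p)%N (fun u => G a u * K (a + p * u)%N)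
                                    (fun u => G b u * L (b + p * u)%N)).
Proof.
rewrite /S decomp; apply: eq_big_nat => a /andP [_ ha].
under eq_bigr => x _ do rewrite decomp.
rewrite exchange_big_nat; apply: eq_big_nat => b /andP [_ hb].
rewrite mulr_sumr; apply: eq_bigr => x _; rewrite mulr_sumr; apply: eq_bigr => y _.
rewrite idx_eq idx_div // !hdec //.
case: ((a + b <= M) && (p %| M - (a + b)))%N; case: (x + y == (M - (a + b)) %/ p)%N;
  rewrite /= ?mul0r ?mul1r ?mulr0 ?mul0r //; ring.
Qed.


Lemma C1_sub f b : C1 p f -> C1 p (fun u => f (b + p * u)%N).
Proof.
move=> [f0 f1]; split => // u m j.
apply: (Zweak (leqnSn j.+1)).
have -> : (b + p * (u + m * p ^ j))%N = ((b + p * u) + m * p ^ j.+1)%N.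
  by rewrite expnS mulnDr addnA mulnCA.
exact: f1.
Qed.

Lemma Zp1 e x : Zq e x -> Zq e.+1 (p%:R * x).
Proof. by move=> h; have := Zmul pr (Zpow pr 1) h; rewrite expn1. Qed.

Lemma Phi_decomp B t m M K L :
  Phi (p * B) t.+1 m M K L =
  \sum_(0 <= a < p) \sum_(0 <= b < p)
    (((a + b <= M) && (p %| M - (a + b)))%N%:R *
      Phi B t m ((M - (a + b)) %/ p)%N (fun u => G b u * K (b + p * u)%N)
                                      (fun u => G a u * L (a + p * u)%N)).
Proof.
rewrite /Phi !S_decomp [X in _ - X]exchange_big_nat -sumrB.
apply: eq_bigr => a _; rewrite -sumrB; apply: eq_bigr => b _.
by rewrite [(b + a)%N]addnC mulrBr.
Qed.

Lemma dwork t : forall B m M K L, (M < B)%N -> C1 p K -> C1 p L ->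
  Zq t.+1 (Phi B t m M K L).
Proof.
have hp : p%:R != 0 :> rat by rewrite pnatr_eq0; case: p pr.
elim: t => [|t ih] B m M K L hMB hK hL; first exact: Phi_base.
rewrite -(Phi_bound _ _ _ _ hMB (leq_pmull B (prime_gt0 pr))) Phi_decomp.
set c := fun a b => ((a + b <= M) && (p %| M - (a + b)))%N%:R : rat.
set M' := fun a b => ((M - (a + b)) %/ p)%N.
have hM' a b : (M' a b < B)%N.
  by apply: leq_ltn_trans hMB; apply: leq_trans (leq_div _ _) (leq_subr _ _).
have T0 : \sum_(0 <= a < p) \sum_(0 <= b < p) c a b * Phi B t m (M' a b) (G b) (G a) = 0.
  set T := LHS; have : T = - T.
    rewrite {1}/T exchange_big_nat /T -sumrN; apply: eq_bigr => a _.
    rewrite -sumrN; apply: eq_bigr => b _.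
    by rewrite /c /M' [(b + a)%N]addnC Phi_anti mulrN.
  lra.
have [K0 _] := hK; have [L0 _] := hL.
rewrite (_ : \sum_(0 <= a < p) \sum_(0 <= b < p) (_ * _) =
   \sum_(0 <= a < p) \sum_(0 <= b < p) (c a b * (Phi B t m (M' a b) (fun u => G b u * K (b + p * u)%N)
                                      (fun u => G a u * L (a + p * u)%N)
     - K 0%N * L 0%N * Phi B t m (M' a b) (G b) (G a))) + K 0%N * L 0%N *
     \sum_(0 <= a < p) \sum_(0 <= b < p) c a b * Phi B t m (M' a b) (G b) (G a)); last first.
  rewrite mulr_sumr -big_split; apply: eq_bigr => a _.
  rewrite mulr_sumr -big_split; apply: eq_bigr => b _ /=; ring.
rewrite T0 mulr0 addr0.
apply: Zsum_nat => a /andP [_ ha]; apply: Zsum_nat => b /andP [_ hb].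
apply: (Zmul0 pr); first exact: (Znat0 pr).
pose K' := fun u => G b u * ((K (b + p * u)%N - K b) / p%:R).
pose L' := fun u => G a u * ((L (a + p * u)%N - L a) / p%:R).
have CK' : C1 p K' by apply: (C1_mul pr); [exact: hG hb|exact: (C1_shift pr)].
have CL' : C1 p L' by apply: (C1_mul pr); [exact: hG ha|exact: (C1_shift pr)].
have CLa : C1 p (fun u => G a u * L (a + p * u)%N) by apply: (C1_mul pr); [exact: hG ha|exact: C1_sub].
rewrite (@Phi_ext B t m (M' a b) _ (fun u => K b * G b u + p%:R * K' u)
                 _ (fun u => G a u * L (a + p * u)%N)); last by [];
  last by move=> u; rewrite /K'; field.
rewrite Phi_linK.
rewrite (@Phi_ext B t m (M' a b) _ (G b) _ (fun u => L a * G a u + p%:R * L' u)) //; last first.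
  by move=> u; rewrite /L'; field.
rewrite Phi_linL.
set P0 := Phi B t m (M' a b) (G b) (G a).
set P1 := Phi B t m (M' a b) (G b) L'.
set P2 := Phi B t m (M' a b) K' _.
have -> : K b * (L a * P0 + p%:R * P1) + p%:R * P2 - K 0%N * L 0%N * P0 =
  (K b * (L a - L 0%N) + (K b - K 0%N) * L 0%N) * P0 + p%:R * (K b * P1) + p%:R * P2 by ring.
have [Kb0 _] := hK.
apply: (Zadd pr); [apply: (Zadd pr)|].
- have h1 : Zq 1 (K b * (L a - L 0%N) + (K b - K 0%N) * L 0%N).
    apply: (Zadd pr); [apply: (Zmul0 pr) => //; exact: C1_base|apply: (Zmul0r pr) => //; exact: C1_base].
  by have := Zmul pr h1 (ih B m (M' a b) (G b) (G a) (hM' a b) (hG hb) (hG ha)).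
- apply: Zp1; apply: (Zmul0 pr) => //; apply: ih => //; exact: hG.
- apply: Zp1; apply: ih => //.
Qed.

End Dwork2.
Section Hyper.
Local Open Scope ring_scope.
Variable p : nat.
Hypothesis pr : prime p.
Hypothesis hodd : odd p.
Notation Zq e x := (in_pZp p e x).

Lemma prod_cong e x y (f g : nat -> rat) :
  (forall l, Zq 0 (f l)) -> (forall l, Zq 0 (g l)) -> (forall l, Zq e (f l - g l)) ->
  Zq e (\prod_(x <= l < y) f l - \prod_(x <= l < y) g l).
Proof.
move=> hf hg hfg.
suff : [/\ Zq e (\prod_(x <= l < y) f l - \prod_(x <= l < y) g l),
          Zq 0 (\prod_(x <= l < y) f l) & Zq 0 (\prod_(x <= l < y) g l)] by case.
elim/big_rec2: _ => [|l b a _ [h1 h2 h3]].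
  by split; [rewrite subrr; apply: (Z0 pr)|apply: (Znat0 pr 1)|apply: (Znat0 pr 1)].
split; [|by apply: (Zmul0 pr)|by apply: (Zmul0 pr)].
have -> : f l * a - g l * b = (f l - g l) * a + g l * (a - b) by ring.
by apply: (Zadd pr); [apply: (Zmul0r pr)|apply: (Zmul0 pr)].
Qed.

Lemma prod_shift e P (f : nat -> rat) : (0 < P)%N ->
  (forall l, Zq 0 (f l)) -> (forall l, Zq e (f (l + P)%N - f l)) ->
  forall n, Zq e (\prod_(n <= l < n + P) f l - \prod_(0 <= l < P) f l).
Proof.
move=> P0 hf hP; elim => [|n ih]; first by rewrite add0n subrr; apply: (Z0 pr).
have -> : \prod_(n.+1 <= l < n.+1 + P) f l - \prod_(0 <= l < P) f l =
   (\prod_(n.+1 <= l < n.+1 + P) f l - \prod_(n <= l < n + P) f l) +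
   (\prod_(n <= l < n + P) f l - \prod_(0 <= l < P) f l) by ring.
apply: (Zadd pr) => //.
rewrite addSn [X in X - _]big_nat_recr /=; last by rewrite -addn1 leq_add2l.
rewrite [X in _ - X]big_ltn; last by rewrite -[X in (X < _)%N]addn0 ltn_add2l.
have -> : \prod_(n.+1 <= i < n + P) f i * f (n + P)%N - f n * \prod_(n.+1 <= i < n + P) f i =
  \prod_(n.+1 <= i < n + P) f i * (f (n + P)%N - f n) by ring.
apply: (Zmul0 pr); first by apply: (Zprod pr).
exact: hP.
Qed.

Definition num (l : nat) : nat := if (p %| (2 * l).+1)%N then 1%N else (2 * l).+1.
Definition den (l : nat) : nat := if (p %| (2 * l).+2)%N then 1%N else (2 * l).+2.
Definition rho (l : nat) : rat := (num l)%:R / (den l)%:R.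
Definition r (n : nat) : rat := \prod_(0 <= l < n) rho l.

Lemma p_gt1 : (1 < p)%N. Proof. exact: prime_gt1. Qed.

Lemma num_nd l : ~~ (p %| num l)%N.
Proof. rewrite /num; case: ifP => [_|/negbT //]; rewrite dvdn1; apply/eqP => h; have := p_gt1; by rewrite h. Qed.

Lemma den_nd l : ~~ (p %| den l)%N.
Proof. rewrite /den; case: ifP => [_|/negbT //]; rewrite dvdn1; apply/eqP => h; have := p_gt1; by rewrite h. Qed.

Lemma den_nz l : (den l)%:R != 0 :> rat.
Proof. rewrite pnatr_eq0; apply: contra (den_nd l) => /eqP ->; exact: dvdn0. Qed.

Lemma Zrho l : Zq 0 (rho l).
Proof. by apply: (Zmul0 pr); [apply: (Znat0 pr)|apply: Zinvnat; apply: den_nd]. Qed.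

Lemma Zr n : Zq 0 (r n).
Proof. by apply: (Zprod pr) => l _; apply: Zrho. Qed.

Section Period.
Variable e : nat.
Hypothesis e0 : (0 < e)%N.
Local Notation P := (p ^ e)%N.

Lemma pdvdP : (p %| P)%N. Proof. by apply: dvdn_exp => //. Qed.
Lemma P_gt0 : (0 < P)%N. Proof. by rewrite expn_gt0 prime_gt0. Qed.

Lemma num_per l : Zq e ((num (l + P))%:R - (num l)%:R).
Proof.
have E : ((2 * (l + P)).+1 = (2 * l).+1 + P * 2)%N by lia.
rewrite /num E dvdn_addl ?dvdn_mulr ?pdvdP //.
case: (p %| (2 * l).+1)%N; first by rewrite subrr; apply: (Z0 pr).
rewrite natrD addrC addKr natrM; exact: (Zint pr e 2).
Qed.

Lemma den_per l : Zq e ((den (l + P))%:R - (den l)%:R).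
Proof.
have E : ((2 * (l + P)).+2 = (2 * l).+2 + P * 2)%N by lia.
rewrite /den E dvdn_addl ?dvdn_mulr ?pdvdP //.
case: (p %| (2 * l).+2)%N; first by rewrite subrr; apply: (Z0 pr).
rewrite natrD addrC addKr natrM; exact: (Zint pr e 2).
Qed.

Lemma den_num h l : (P.+1 = h * 2)%N -> Zq e ((den l)%:R - (num (l + h))%:R).
Proof.
move=> hh.
have E : ((2 * (l + h)).+1 = (2 * l).+2 + P)%N.
  by lia.
rewrite /num /den E dvdn_addl ?pdvdP //.
case: (p %| (2 * l).+2)%N; first by rewrite subrr; apply: (Z0 pr).
rewrite natrD opprD addrA subrr add0r; apply: Zopp; exact: (Zpow pr e).
Qed.

Lemma prod_num_den n :
  Zq e (\prod_(n <= l < n + P) (num l)%:R - \prod_(n <= l < n + P) (den l)%:R :> rat).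
Proof.
have [h hh] : exists h, (P.+1 = h * 2)%N.
  exists (P.+1)./2; rewrite muln2; have := odd_double_half P.+1.
  by rewrite /= oddX hodd orbT /= add0n => ->.
have Zn l : Zq 0 (num l)%:R by apply: (Znat0 pr).
have Zd l : Zq 0 (den l)%:R by apply: (Znat0 pr).
set X1 := \prod_(n <= l < n + P) _; set X2 := \prod_(n <= l < n + P) _.
have s1 := prod_shift P_gt0 Zn num_per n.
have s2 := prod_shift P_gt0 Zd den_per n.
have s3 := prod_shift P_gt0 Zn num_per h.
have s4 : Zq e (\prod_(0 <= l < P) (den l)%:R - \prod_(h <= l < h + P) (num l)%:R :> rat).
  have -> : \prod_(h <= l < h + P) (num l)%:R = \prod_(0 <= l < P) (num (l + h))%:R :> rat.
    by rewrite -{1}[h]add0n big_addn addKn.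
  by apply: prod_cong => // l; apply: den_num hh.
have -> : X1 - X2 = (X1 - \prod_(0 <= l < P) (num l)%:R) -
   (\prod_(h <= l < h + P) (num l)%:R - \prod_(0 <= l < P) (num l)%:R) -
   (\prod_(0 <= l < P) (den l)%:R - \prod_(h <= l < h + P) (num l)%:R) -
   (X2 - \prod_(0 <= l < P) (den l)%:R) by ring.
apply: (Zsub pr); [apply: (Zsub pr); [apply: (Zsub pr)|]|]; [exact: s1|exact: s3|exact: s4|exact: s2].
Qed.

Lemma W_cong n : Zq e (\prod_(n <= l < n + P) rho l - 1).
Proof.
rewrite /rho big_split /= prodfV.
set D := \prod_(n <= l < n + P) (den l)%:R.
have D0 : D != 0 by rewrite prodf_seq_neq0; apply/allP => l _; apply: den_nz.
have -> : \prod_(n <= i < n + P) (num i)%:R * D^-1 - 1 =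
  (\prod_(n <= i < n + P) (num i)%:R - D) * (\prod_(n <= i < n + P) (den i)%:R^-1).
  by rewrite prodfV -/D; field.
apply: (Zmul0r pr); first exact: prod_num_den.
by apply: (Zprod pr) => l _; apply: Zinvnat; apply: den_nd.
Qed.

Lemma r_per n m : Zq e (r (n + m * P) - r n).
Proof.
have hW : forall m, Zq e (\prod_(n <= l < n + m * P) rho l - 1).
  elim=> [|m' ih]; first by rewrite mul0n addn0 big_geq // subrr; apply: (Z0 pr).
  have -> : (n + m'.+1 * P = (n + m' * P) + P)%N by rewrite mulSn [(P + _)%N]addnC addnA.
  rewrite (big_cat_nat _ (n := n + m' * P)) ?leq_addr //=.
  set a := \prod_(n <= i < n + m' * P) rho i.
  set b := \prod_(_ <= i < _) rho i.
  have hb : Zq e (b - 1) by apply: W_cong.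
  have -> : a * b - 1 = (a - 1) * b + (b - 1) by ring.
  apply: (Zadd pr) => //; apply: (Zmul0r pr) => //.
  by apply: (Zprod pr) => l _; apply: Zrho.
rewrite /r (big_cat_nat _ (n := n)) ?leq_addr //=.
have -> : \prod_(0 <= i < n) rho i * \prod_(n <= i < n + m * P) rho i - \prod_(0 <= i < n) rho i =
  \prod_(0 <= i < n) rho i * (\prod_(n <= i < n + m * P) rho i - 1) by ring.
by apply: (Zmul0 pr); [apply: Zr|apply: hW].
Qed.

End Period.

End Hyper.
Section Hyper2.
Local Open Scope ring_scope.
Variable p : nat.
Hypothesis pr : prime p.
Hypothesis hodd : odd p.
Notation Zq e x := (in_pZp p e x).

Lemma p_ge3 : (3 <= p)%N.
Proof. have := prime_gt1 pr; case: p hodd => [|[|[|]]] //. Qed.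

Lemma small_dvd x : (0 < x < p.*2)%N -> (p %| x)%N = (x == p).
Proof.
move=> /andP [h1 h2]; apply/idP/eqP => [|->]; last exact: dvdnn.
case/dvdnP => k hk; subst x; have p0 := prime_gt0 pr.
have : (k < 2)%N by rewrite -(ltn_pmul2r p0) mul2n.
have : (0 < k)%N by case: k h1 {h2}.
move=> k0 k2; have -> : k = 1%N by lia.
by rewrite mul1n.
Qed.

Definition a n : rat := pochhammer (1 / 2) n / (n`!)%:R.

Lemma a0 : a 0 = 1.
Proof. by rewrite /a /pochhammer big_ord0 fact0 divr1. Qed.

Lemma a_rec n : a n.+1 = a n * ((2 * n).+1)%:R / ((2 * n).+2)%:R.
Proof.
rewrite /a /pochhammer big_ord_recr /= factS natrM.
have f0 : (n`!)%:R != 0 :> rat by rewrite pnatr_eq0 -lt0n fact_gt0.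
have E1 : ((2 * n).+1)%:R = 2 * n%:R + 1 :> rat by rewrite -addn1 natrD natrM.
have E2 : ((2 * n).+2)%:R = 2 * n%:R + 2 :> rat by rewrite -addn2 natrD natrM.
have E3 : (n.+1)%:R = n%:R + 1 :> rat by rewrite -addn1 natrD.
rewrite E1 E2 E3.
have h1 : (n%:R + 1) != 0 :> rat by rewrite -E3 pnatr_eq0.
have h2 : (2 * n%:R + 2) != 0 :> rat by rewrite -E2 pnatr_eq0.
field; apply/and3P; split => //.
Qed.


Definition c (b u : nat) : rat := if (p < (2 * b).+1)%N then p%:R * ((2 * u).+1)%:R else 1.

Lemma divmod_small u b : (b < p)%N -> ((u * p + b) %/ p = u /\ (u * p + b) %% p = b)%N.
Proof.
move=> hb; have p0 := prime_gt0 pr; split.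
  by rewrite divnMDl // divn_small // addn0.
by rewrite modnMDl modn_small.
Qed.

Lemma a_dec n : a n = a (n %/ p) * r p n * c (n %% p) (n %/ p).
Proof.
have p0 := prime_gt0 pr; have p3 := p_ge3.
elim: n => [|n ih].
  rewrite div0n mod0n a0 /r big_geq // /c (_ : (p < (2 * 0).+1)%N = false) ?mul1r ?mulr1 //; lia.
set u := (n %/ p)%N in ih *; set b := (n %% p)%N in ih *.
have hn : n = (u * p + b)%N by rewrite /u /b -divn_eq.
have hb : (b < p)%N by rewrite /b ltn_pmod.
have rS : r p n.+1 = r p n * rho p n by rewrite /r big_nat_recr.
rewrite a_rec ih rS /rho.
have Hd1 : ((2 * n).+1 = (2 * b).+1 + p * (2 * u))%N by rewrite hn; lia.
have Hd2 : ((2 * n).+2 = (2 * b).+2 + p * (2 * u))%N by rewrite hn; lia.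
have dv1 : (p %| (2 * n).+1)%N = ((2 * b).+1 == p) by rewrite Hd1 dvdn_addl ?dvdn_mulr // small_dvd //; rewrite -mul2n; apply/andP; split; lia.
have hp : p%:R != 0 :> rat by rewrite pnatr_eq0 -lt0n.
case: (ltnP b.+1 p) => hb1.
- have [hq hr] := divmod_small u hb1.
  have dv2 : (p %| (2 * n).+2)%N = ((2 * b).+2 == p) by rewrite Hd2 dvdn_addl ?dvdn_mulr // small_dvd //; rewrite -mul2n; apply/andP; split; lia.
  have e1 : (n.+1 = u * p + b.+1)%N by rewrite hn addnS.
  rewrite e1 hq hr.
  have nd2 : ((2 * b).+2 == p) = false.
    by apply/negbTE/eqP => h; move: hodd; rewrite -h /= negbK oddM.
  rewrite /num /den dv1 dv2 nd2.
  case: (eqVneq (2 * b).+1 p) => h21.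
  + have E : ((2 * n).+1 = p * (2 * u).+1)%N by rewrite Hd1 h21 mulnS.
    rewrite /c {1}h21 ltnn (_ : (p < (2 * b.+1).+1)%N) ?mulr1 ?mul1r; last by lia.
    have d0 : ((2 * n).+2)%:R != 0 :> rat by rewrite pnatr_eq0.
    move: d0; set D := ((2 * n).+2)%:R => d0.
    rewrite E natrM; ring.
  + rewrite /c.
    rewrite (_ : (p < (2 * b.+1).+1)%N = (p < (2 * b).+1)%N); last first.
      apply/idP/idP => h; last by lia.
      move: h21 nd2; rewrite -(eqn_add2r 0); move/eqP => h21 /eqP nd2; lia.
    ring.
- have hbp : b.+1 = p by apply/eqP; rewrite eqn_leq hb hb1.
  have e1 : (n.+1 = u.+1 * p + 0)%N by rewrite hn addn0 mulSn -hbp; lia.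
  have [hq hr] := divmod_small u.+1 p0.
  rewrite e1 hq hr.
  have n1 : ((2 * b).+1 == p) = false by apply/negbTE/eqP; lia.
  have n2 : ((2 * b).+2 == p) = false by apply/negbTE/eqP; lia.
  have E2 : ((2 * n).+2 = p * (2 * u).+2)%N by rewrite hn -hbp; lia.
  have dv2' : (p %| (2 * n).+2)%N by rewrite E2 dvdn_mulr.
  rewrite /num /den dv1 n1 dv2' a_rec /c (_ : (p < (2 * 0).+1)%N = false); last by lia.
  rewrite (_ : (p < (2 * b).+1)%N); last by lia.
  rewrite E2 natrM.
  have d0 : ((2 * u).+2)%:R != 0 :> rat by rewrite pnatr_eq0.
  move: d0; set D := ((2 * u).+2)%:R => d0; clearbody D; field; apply/andP; split => //.
Qed.


Lemma a_dec2 b u : (b < p)%N -> a (b + p * u)%N = a u * (r p (b + p * u)%N * c b u).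
Proof.
move=> hb; have [hq hr] := divmod_small u hb.
by rewrite a_dec (_ : (b + p * u = u * p + b)%N) ?hq ?hr ?mulrA // addnC mulnC.
Qed.

Lemma a_Z n : Zq 0 (a n).
Proof.
elim: n {-2}n (leqnn n) => [|n ih] m hm.
  by move: hm; rewrite leqn0 => /eqP ->; rewrite a0; apply: (Znat0 pr 1).
rewrite a_dec; apply: (Zmul0r pr); [apply: (Zmul0r pr)|].
- case: m hm => [|m] hm; first by rewrite div0n a0; apply: (Znat0 pr 1).
  apply: ih; rewrite -ltnS; apply: leq_trans hm.
  by apply: ltn_Pdiv => //; exact: prime_gt1.
- exact: (Zr pr).
- rewrite /c; case: ifP => _; last by apply: (Znat0 pr 1).
  by apply: (Zmul0 pr); apply: (Znat0 pr).
Qed.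

Lemma C1_c b : C1 p (c b).
Proof.
case h: (p < (2 * b).+1)%N; last first.
  apply: (C1_ext (f := fun _ => 1)); first by move=> u; rewrite /c h.
  by apply: (C1_const pr); apply: (Znat0 pr 1).
apply: (C1_ext (f := fun u => p%:R * ((2 * u).+1)%:R)); first by move=> u; rewrite /c h.
split => [u|u m j]; first by apply: (Zmul0 pr); apply: (Znat0 pr).
have -> : p%:R * (2 * (u + m * p ^ j)).+1%:R - p%:R * (2 * u).+1%:R =
  (p ^ j.+1)%:R * (2 * m)%:R :> rat.
  rewrite -!natrM -natrB; last by nia.
  congr (_%:R); rewrite expnS; nia.
exact: (Zint pr j.+1 (2 * m)%N).
Qed.

Lemma C1_r b : C1 p (fun u => r p (b + p * u)%N).
Proof.
split => [u|u m j]; first exact: (Zr pr).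
have -> : (b + p * (u + m * p ^ j) = (b + p * u) + m * p ^ j.+1)%N.
  by rewrite expnS mulnDr addnA mulnCA.
exact: (r_per pr hodd).
Qed.

Lemma C1_pow f k : C1 p f -> C1 p (fun u => f u ^+ k).
Proof.
move=> hf; elim: k => [|k ih].
  by apply: (C1_ext (f := fun _ => 1)) => //; apply: (C1_const pr); apply: (Znat0 pr 1).
apply: (C1_ext (f := fun u => f u * f u ^+ k)); first by move=> u; rewrite exprS.
exact: (C1_mul pr).
Qed.

Definition GG k b u := (r p (b + p * u)%N * c b u) ^+ k.

Lemma C1_GG k b : C1 p (GG k b).
Proof. apply: C1_pow; apply: (C1_mul pr); [exact: C1_r|exact: C1_c]. Qed.

Lemma Fser_dec k b u : (b < p)%N -> Fser k (b + p * u)%N = Fser k u * GG k b u.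
Proof. by move=> hb; rewrite /Fser -/(a _) -/(a u) a_dec2 // exprMn. Qed.

Lemma Fser_Z k n : Zq 0 (Fser k n).
Proof. by rewrite /Fser -/(a _); apply: (Zexp pr); apply: a_Z. Qed.

End Hyper2.
Section Final.
Local Open Scope ring_scope.
Variable p : nat.
Hypothesis pr : prime p.
Notation Zq e x := (in_pZp p e x).

Lemma sum_dvd_split (h : nat -> rat) M :
  \sum_(0 <= i < M.+1) (if (p %| i)%N then h i else 0) =
  \sum_(0 <= j < (M %/ p).+1) h (p * j)%N.
Proof.
have p0 := prime_gt0 pr.
elim: M => [|M ih]; first by rewrite div0n !big_nat1 dvdn0 muln0.
rewrite big_nat_recr //= ih divnS //.
case: (boolP (p %| M.+1)%N) => hd /=; last by rewrite addr0 add0n.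
rewrite add1n [RHS]big_nat_recr //=; congr (_ + h _).
by rewrite -[LHS](divnK hd) divnS // hd add1n mulnC.
Qed.

Lemma pm_subst f g N : ps_mul f (subst_pow p g) N =
  \sum_(0 <= j < (N %/ p).+1) f (N - p * j)%N * g j.
Proof.
have p0 := prime_gt0 pr.
have E := sum_dvd_split (fun i => f (N - i)%N * g (i %/ p)%N) N; move: E => /= E.
transitivity (\sum_(0 <= j < (N %/ p).+1) f (N - p * j)%N * g (p * j %/ p)%N); last first.
  by apply: eq_bigr => j _ /=; rewrite mulKn.
rewrite -E.
rewrite /ps_mul -(big_mkord xpredT (fun i => f i * subst_pow p g (N - i)%N)).
rewrite big_nat_rev /=.
apply: eq_big_nat => i /andP [_ hi].
rewrite add0n subSS subKn; last by rewrite -ltnS.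
by rewrite /subst_pow; case: ifP => hd; rewrite ?mulr0.
Qed.

End Final.

Local Open Scope ring_scope.
Lemma sum_eq_pt (g : nat -> rat) B c : (c < B)%N ->
  \sum_(0 <= y < B) (y == c)%:R * g y = g c.
Proof.
elim: B => [//|B ih] hc.
rewrite big_nat_recr //=.
case: (ltnP c B) => h.
  by rewrite ih // (_ : (B == c) = false) ?mul0r ?addr0 //; apply/negbTE; rewrite neq_ltn h orbT.
have -> : c = B by apply/eqP; rewrite eqn_leq h -ltnS hc.
rewrite eqxx mul1r big_nat_cond big1 ?add0r // => y /andP [/andP [_ hy] _].
by rewrite (_ : (y == B) = false) ?mul0r //; apply/negbTE; rewrite neq_ltn hy.
Qed.

Lemma dbl_single (phi : nat -> nat -> rat) M :
  \sum_(0 <= x < M.+1) \sum_(0 <= y < M.+1) ((x + y == M)%N%:R * phi x y) =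
  \sum_(0 <= x < M.+1) phi x (M - x)%N.
Proof.
apply: eq_big_nat => x /andP [_ hx].
rewrite -(@sum_eq_pt (phi x) M.+1 (M - x)%N) ?ltnS ?leq_subr //.
apply: eq_big_nat => y _; congr (_%:R * _); apply/eqP/eqP; lia.
Qed.

Close Scope ring_scope.


Local Open Scope ring_scope.
Lemma div_eq0 x q : (0 < q)%N -> ((x %/ q == 0) = (x < q))%N.
Proof. by move=> q0; rewrite -leqn0 leqNgt divn_gt0 // -ltnNge. Qed.

Lemma lt_pq p v y q : (0 < p)%N -> (v < p)%N -> ((v + p * y < p * q) = (y < q))%N.
Proof. move=> p0 hv; apply/idP/idP => h; nia. Qed.

Lemma S_single p A M t m K L :
  S p A M.+1 t m M K L =
  (\sum_(0 <= x < M.+1) ((x %/ p ^ t)%N == m)%:R * (A x * A (M - x)%N * (K x * L (M - x)%N)))%R.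
Proof. by rewrite /S (dbl_single (fun x y => ((x %/ p ^ t)%N == m)%:R * (A x * A y * (K x * L y)))%R). Qed.
Close Scope ring_scope.

Theorem mainTheorem3 (k p s : nat) :
  (2 <= k)%N -> prime p -> odd p -> (1 <= s)%N ->
  pcong p s
    (ps_div (Fser k) (subst_pow p (Fser k)))
    (ps_div (ps_trunc (p ^ s) (Fser k)) (subst_pow p (ps_trunc (p ^ s.-1) (Fser k)))).
Proof.
Local Open Scope ring_scope.
move=> hk pr hodd hs.
have p0 := prime_gt0 pr.
have hps : (p ^ s = p * p ^ s.-1)%N by rewrite -expnS prednK.
have q0 : (0 < p ^ s.-1)%N by rewrite expn_gt0 p0.
have F0 : Fser k 0 = 1 by rewrite /Fser /pochhammer big_ord0 fact0 divr1 expr1n.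
apply: (reduce pr).
- by rewrite /subst_pow dvdn0 div0n.
- by rewrite /subst_pow dvdn0 div0n /ps_trunc q0.
- move=> i; rewrite /subst_pow; case: ifP => _; [exact: Fser_Z|exact: Z0].
- move=> i; rewrite /subst_pow /ps_trunc; case: ifP => _; last exact: Z0.
  by case: ifP => _; [exact: Fser_Z|exact: Z0].
move=> N; rewrite !(pm_subst pr).
set M := (N %/ p)%N; set v := (N %% p)%N.
have hN : N = (v + p * M)%N by rewrite /v /M addnC mulnC -divn_eq.
have hv : (v < p)%N by rewrite ltn_pmod.
have key := dwork pr (Fser_Z pr hodd k) (fun a u ha => Fser_dec pr hodd k u ha)
  (fun a ha => C1_GG pr hodd k a) s.-1 0 (B := M.+1) (M := M) (K := GG p k v) (L := fun _ => 1)
  (ltnSn M) (C1_GG pr hodd k v) (C1_const pr (Znat0 pr 1)).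
rewrite prednK // in key.
suff -> : \sum_(0 <= j < M.+1) Fser k (N - p * j)%N * ps_trunc (p ^ s.-1) (Fser k) j -
  \sum_(0 <= j < M.+1) ps_trunc (p ^ s) (Fser k) (N - p * j)%N * Fser k j =
  Phi p (Fser k) M.+1 s.-1 0 M (GG p k v) (fun _ => 1) by [].
have e j : (j <= M)%N -> (N - p * j = v + p * (M - j))%N.
  by move=> hj; rewrite hN mulnBr addnBA // leq_mul2l hj orbT.
rewrite /Phi !S_single.
congr (_ - _).
  apply: eq_big_nat => j /andP [_ hj]; rewrite ltnS in hj.
  rewrite e // Fser_dec // /ps_trunc div_eq0 //.
  by case: ifP => _; rewrite /= ?mulr0 ?mul0r // ?mul1r; ring.
rewrite big_nat_rev /=; apply: eq_big_nat => j /andP [_ hj]; rewrite ltnS in hj.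
rewrite add0n subSS e ?leq_subr // subKn // /ps_trunc hps lt_pq // div_eq0 //.
rewrite Fser_dec //.
by case: ifP => _; rewrite /= ?mulr0 ?mul0r // ?mul1r; ring.
Qed.
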